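(* Let $U$ be the distillation gadget on a complete $B$-ary tree of depth $D$. For every qubit (node) $i$ of the tree, $|\mathrm{supp}(U(Z_i\otimes\mathbb I)U^\dagger)|\le D$; that is, the locality of the parent Hamiltonian of the distillation circuit is at most $D$.
   Context: Layers of the tree are $L_1$ (leaves), $L_2,\dots,L_D$ (root); $N_u$ denotes the children of node $u$; each node is a qubit. The distillation gadget $U$: for $i=2,3,\dots,D$ in this order, for each parent $u\in L_i$ and each child $c\in N_u$, apply $\mathsf{CNOT}$ with control $u$ and target $c$. The parent Hamiltonian of $U$ is $\sum_iUZ_iU^\dagger$. *)

(* Defs.v *)
From HB Require Import structures.
From mathcomp Require Import all_boot all_order all_algebra all_field.
Set Implicit Arguments. Unset Strict Implicit. Unset Printing Implicit Defensive.
Import Order.TTheory GRing.Theory Num.Theory.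
Local Open Scope ring_scope.

Section Qubits.
Variable Q : finType.

(* computational basis states: bit assignments to the qubits *)
Definition cbasis := {ffun Q -> bool}.
Definition qdim := #|{: cbasis}|.
Definition qop := 'M[algC]_qdim.

Definition bs (i : 'I_qdim) : cbasis := enum_val (i : 'I_#|{: cbasis}|).

Definition flip (q : Q) (i : 'I_qdim) : 'I_qdim :=
  enum_rank [ffun q' => if q' == q then ~~ bs i q' else bs i q'] : 'I_#|{: cbasis}|.

Definition Zop (q : Q) : qop :=
  \matrix_(i, j) ((i == j)%:R * (-1) ^+ (bs i q)).

Definition cnot_map (c t : Q) (x : cbasis) : cbasis :=
  [ffun q => if q == t then x t (+) x c else x q].
Definition CNOT (c t : Q) : qop :=
  \matrix_(i, j) (bs i == cnot_map c t (bs j))%:R.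

Definition dagger (O : qop) : qop := map_mx Num.conj O^T.

(* O acts as the identity on qubit q, i.e. O = I_q (x) O' : O does not
   change bit q, and its action does not depend on the value of bit q. *)
Definition trivial_on (O : qop) (q : Q) : bool :=
  [forall i, forall j,
     ((bs i q != bs j q) ==> (O i j == 0)) && (O i j == O (flip q i) (flip q j))].

Definition supp (O : qop) : {set Q} := [set q | ~~ trivial_on O q].

(* product of gates applied in order: first gate of the list acts first *)
Definition circuit (gates : seq (Q * Q)) : qop :=
  foldl (fun acc g => CNOT g.1 g.2 *m acc) 1%:M gates.
End Qubits.

(* A node is a word over 'I_B of length k < D (its path from the root).
   The root has k = 0. Layer of a node of length k is D - k, so the
   leaves (k = D-1) form L_1 and the root forms L_D. *)
Definition tnode (B D : nat) := {k : 'I_D & k.-tuple 'I_B}.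

Definition nlen B D (u : tnode B D) : nat := tag u.
Definition nword B D (u : tnode B D) : seq 'I_B := tagged u.

Definition layer_of B D (u : tnode B D) : nat := (D - nlen u)%N.
Definition layer B D (i : nat) : {set tnode B D} := [set u | layer_of u == i].

Definition is_child B D (u c : tnode B D) : bool :=
  (nlen c == (nlen u).+1) && (take (nlen u) (nword c) == nword u).
Definition children B D (u : tnode B D) : {set tnode B D} := [set c | is_child u c].

(* gate list of the distillation gadget: for i = 2,...,D in this order,
   for each parent u in L_i and each child c of u, CNOT(control u, target c).
   (Gates within one layer commute, so the enumeration order inside a layer
   is immaterial.) *)
Definition gadget_gates B D : seq (tnode B D * tnode B D) :=
  flatten [seq flatten [seq [seq (u, c) | c <- enum (children u)]
                         | u <- enum (layer B D i)]
          | i <- iota 2 (D - 1)].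

Definition gadget B D : qop (tnode B D) := circuit (gadget_gates B D).

(* Main.v *)
Require Import Defs.
From HB Require Import structures.
From mathcomp Require Import all_boot all_order all_algebra all_field.
Import Order.TTheory GRing.Theory Num.Theory.
Local Open Scope ring_scope.
Set Implicit Arguments. Unset Strict Implicit. Unset Printing Implicit Defensive.

Section Gen.
Variable Q : finType.

Definition weight (S : {set Q}) (x : cbasis Q) : algC :=
  \prod_(q in S) (-1) ^+ x q.

Definition diagS (S : {set Q}) : qop Q :=
  \matrix_(i, j) ((i == j)%:R * weight S (bs i)).

Definition step (g : Q * Q) (S : {set Q}) : {set Q} :=
  if g.2 \in S then (if g.1 \in S then S :\ g.1 else g.1 |: S) else S.

Lemma bs_inj : injective (@bs Q).
Proof. move=> i j; rewrite /bs; exact: enum_val_inj. Qed.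

Lemma bs_rank (x : cbasis Q) : bs (enum_rank x : 'I_(qdim Q)) = x.
Proof. by rewrite /bs enum_rankK. Qed.

Lemma sign_addb (a b : bool) : (-1) ^+ (a (+) b) = (-1) ^+ a * (-1) ^+ b :> algC.
Proof. by case: a; case: b; rewrite /= ?expr0 ?expr1 ?mulN1r ?opprK ?mul1r. Qed.

Lemma sign_sq (a : bool) : (-1) ^+ a * (-1) ^+ a = 1 :> algC.
Proof. by case: a; rewrite /= ?expr0 ?expr1 ?mulN1r ?opprK ?mul1r. Qed.

Lemma cnot_inv c t (x : cbasis Q) : c != t ->
  cnot_map c t (cnot_map c t x) = x.
Proof.
move=> ct; apply/ffunP => q; rewrite /cnot_map !ffunE.
case: eqP => [->|] //; rewrite (negbTE ct) eqxx.
by rewrite -addbA addbb addbF.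
Qed.

Lemma weight_cnot c t S x : c != t ->
  weight S (cnot_map c t x) = weight (step (c, t) S) x.
Proof.
move=> ct; rewrite /step /=.
case: ifP => tS.
  rewrite /weight (bigD1 t) //= ffunE eqxx sign_addb.
  have E : \prod_(q in S | q != t) (-1) ^+ cnot_map c t x q
         = \prod_(q in S | q != t) ((-1) ^+ x q : algC).
    by apply: eq_bigr => q /andP [_ /negbTE qt]; rewrite ffunE qt.
  rewrite E mulrAC -(bigD1 t (F := fun q => (-1) ^+ x q)) //.
  case: ifP => cS.
    rewrite (bigD1 c) //= mulrC mulrA sign_sq mul1r.
    by apply: eq_bigl => q; rewrite !inE andbC.
  by rewrite big_setU1 ?cS //= mulrC.
rewrite /weight; apply: eq_bigr => q qS; rewrite ffunE.
case: eqP => // qt; by rewrite qt tS in qS.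
Qed.

Lemma dagger_mul (A B : qop Q) : dagger (A *m B) = dagger B *m dagger A.
Proof. by rewrite /dagger trmx_mul map_mxM. Qed.

Lemma dagger1 : dagger (1%:M : qop Q) = 1%:M.
Proof. by rewrite /dagger trmx1 map_mx1. Qed.

Lemma mul_diag (M : qop Q) S i l : (M *m diagS S) i l = M i l * weight S (bs l).
Proof.
rewrite mxE (bigD1 l) //= big1; last first.
  by move=> k /negbTE kl; rewrite mxE kl mul0r mulr0.
by rewrite addr0 mxE eqxx mul1r.
Qed.

Lemma conj_cnot c t S : c != t ->
  CNOT c t *m diagS S *m dagger (CNOT c t) = diagS (step (c, t) S).
Proof.
move=> ct; apply/matrixP => i j; rewrite mxE.
set l0 : 'I_(qdim Q) := enum_rank (cnot_map c t (bs i)).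
have hl0 : bs l0 = cnot_map c t (bs i) by rewrite bs_rank.
rewrite (bigD1 l0) //= big1; last first.
  move=> l /negbTE ll0; rewrite mul_diag !mxE.
  have -> : (bs i == cnot_map c t (bs l)) = false.
    apply/negbTE/eqP => E; move: ll0; rewrite -(inj_eq (@bs_inj)) hl0 E cnot_inv //.
    by rewrite eqxx.
  by rewrite !mul0r.
rewrite addr0 mul_diag !mxE hl0 !cnot_inv // eqxx mul1r conjC_nat.
by rewrite weight_cnot // (inj_eq (@bs_inj)) eq_sym mulrC.
Qed.

Lemma foldl_circuit (gs : seq (Q * Q)) (A : qop Q) :
  foldl (fun acc g => CNOT g.1 g.2 *m acc) A gs = circuit gs *m A.
Proof.
elim: gs A => [|g gs IH] A /=; first by rewrite /circuit /= mul1mx.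
rewrite IH; have -> : circuit (g :: gs) = foldl (fun acc g => CNOT g.1 g.2 *m acc) (CNOT g.1 g.2 *m 1%:M) gs by [].
by rewrite IH mulmx1 mulmxA.
Qed.

Lemma conj_circuit (gs : seq (Q * Q)) S :
  all (fun g => g.1 != g.2) gs ->
  circuit gs *m diagS S *m dagger (circuit gs) = diagS (foldl (fun S g => step g S) S gs).
Proof.
elim: gs S => [|g gs IH] S /=.
  by rewrite /circuit /= mul1mx dagger1 mulmx1.
case/andP => hg hgs.
have -> : circuit (g :: gs) = circuit gs *m CNOT g.1 g.2.
  have -> : circuit (g :: gs) = foldl (fun acc g => CNOT g.1 g.2 *m acc) (CNOT g.1 g.2 *m 1%:M) gs by [].
  by rewrite foldl_circuit mulmx1.
rewrite dagger_mul !mulmxA -(mulmxA _ (CNOT _ _)) -(mulmxA _ _ (dagger (CNOT _ _))).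
by rewrite conj_cnot // -IH; case: g hg.
Qed.

Lemma Zop_diag (q : Q) : Zop q = diagS [set q].
Proof. by apply/matrixP => i j; rewrite !mxE /weight big_set1. Qed.

Lemma bs_flip (q : Q) (i : 'I_(qdim Q)) : bs (flip q i) = [ffun q' => if q' == q then ~~ bs i q' else bs i q'].
Proof. by rewrite /flip bs_rank. Qed.

Lemma flip_inj q : injective (@flip Q q).
Proof.
move=> i j E; apply: bs_inj; apply/ffunP => q'.
have := congr1 (fun k => bs k q') E; rewrite !bs_flip !ffunE.
by case: eqP => _ //; case: (bs i q'); case: (bs j q').
Qed.

Lemma supp_diag S : supp (diagS S) \subset S.
Proof.
apply/subsetP => q; rewrite inE; apply: contraNT => qS.
apply/forallP => i; apply/forallP => j; apply/andP; split.
  apply/implyP => H; rewrite mxE; case: (i =P j) => [E|_]; last by rewrite mul0r.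
  by rewrite E eqxx in H.
rewrite !mxE (inj_eq (@flip_inj q)); apply/eqP; congr (_ * _).
apply: eq_bigr => q' q'S; rewrite bs_flip ffunE; case: eqP => // E.
by rewrite -E q'S in qS.
Qed.
End Gen.
Section Tree.
Variables B D : nat.
Implicit Types u c t : tnode B D.

Definition anc (i : tnode B D) : {set tnode B D} :=
  [set u | (nlen u <= nlen i)%N && (nword u == take (nlen u) (nword i))].

Lemma child_neq (u c : tnode B D) : is_child u c -> u != c.
Proof.
case/andP => /eqP h _; apply/eqP => E; rewrite E in h.
by move: (n_Sn (nlen c)); rewrite -h.
Qed.

Lemma anc_parent (i u c : tnode B D) : is_child u c -> c \in anc i -> u \in anc i.
Proof.
case/andP => /eqP hl /eqP hw; rewrite !inE => /andP [hc /eqP hwc].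
have hle : (nlen u <= nlen c)%N by rewrite hl.
apply/andP; split; first exact: leq_trans hle hc.
by rewrite -hw hwc take_takel.
Qed.

Lemma step_anc (i : tnode B D) (g : tnode B D * tnode B D) (S : {set tnode B D}) : is_child g.1 g.2 -> S \subset anc i ->
  step g S \subset anc i.
Proof.
move=> hg hS; rewrite /step; case: ifP => tS //.
have cA : g.1 \in anc i by apply: anc_parent hg (subsetP hS _ tS).
case: ifP => _; first exact: subset_trans (subD1set _ _) hS.
apply/subsetP => x; rewrite in_setU1 => /orP [/eqP -> //|]; exact: (subsetP hS).
Qed.

Lemma fold_anc (i : tnode B D) (gs : seq (tnode B D * tnode B D)) (S : {set tnode B D}) : all (fun g => is_child g.1 g.2) gs -> S \subset anc i ->
  foldl (fun S g => step g S) S gs \subset anc i.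
Proof.
elim: gs S => [|g gs IH] S //= /andP [hg hgs] hS.
by apply: IH => //; apply: step_anc.
Qed.

Lemma anc_self (i : tnode B D) : i \in anc i.
Proof.
rewrite inE leqnn /= take_oversize //.
by rewrite /nword /nlen size_tuple.
Qed.

Lemma card_anc (i : tnode B D) : (#|anc i| <= D)%N.
Proof.
rewrite -(card_in_imset (f := fun u : tnode B D => tag u)).
  by apply: leq_trans (max_card _) _; rewrite card_ord.
move=> [k w] [k' w']; rewrite !inE /nlen /nword /= => /andP [_ /eqP h1] /andP [_ /eqP h2] E.
subst k'; congr existT; apply: val_inj; by rewrite /= h1 h2.
Qed.

Lemma gadget_child : all (fun g => is_child g.1 g.2) (gadget_gates B D).
Proof.
apply/allP => g /flattenP [s /mapP [k _ ->]] /flattenP [s' /mapP [u _ ->]] /mapP [c hc ->] /=.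
by rewrite mem_enum inE in hc.
Qed.
End Tree.

Theorem claim8p4 (B D : nat) (hB : (1 < B)%N) (hD : (0 < D)%N) (i : tnode B D) :
  (#| supp (gadget B D *m Zop i *m dagger (gadget B D)) | <= D)%N.
Proof.
rewrite /gadget Zop_diag conj_circuit; last first.
  apply/allP => g hg; apply: child_neq.
  exact: (allP (gadget_child B D)).
apply: leq_trans (subset_leq_card (supp_diag _)) _.
apply: leq_trans (card_anc i).
apply: subset_leq_card; apply: fold_anc; first exact: gadget_child.
by rewrite sub1set anc_self.
Qed.
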